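(* Let $X,Y$ be mm-spaces and $p\in[1,+\infty]$. Then for every $\kappa\in(0,1)$ and $\kappa'\in(0,1/2)$, $$\mathrm{OD}(X\times_p Y;-(\kappa+\kappa'))\le\mathrm{OD}(X;-\kappa)+2\,\mathrm{OD}(Y;-\kappa').$$
   Context: An mm-space is a triple $(X,d_X,m_X)$ with $(X,d_X)$ complete separable metric space and $m_X$ a Borel probability measure. For $p<\infty$, $F_p(s,t)=(s^p+t^p)^{1/p}$, $F_\infty(s,t)=\max\{s,t\}$; $X\times_pY:=(X\times Y,d_{F_p},m_X\otimes m_Y)$ with $d_{F_p}((x,y),(x',y'))=F_p(d_X(x,x'),d_Y(y,y'))$. Partial diameter: $\mathrm{PD}(X;\alpha)$ = infimum of $\operatorname{diam}A$ over Borel $A$ with $m_X(A)\ge\alpha$. Observable diameter: $\mathrm{OD}(X;-\kappa):=\sup_f\mathrm{PD}((\mathbb R,|\cdot|,f_*m_X);1-\kappa)$ over 1-Lipschitz $f\colon X\to\mathbb R$. *)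

(* Defs.v *)
From HB Require Import structures.
From mathcomp Require Import all_boot all_order all_algebra.
From mathcomp Require Import all_classical all_reals all_analysis.
Set Implicit Arguments. Unset Strict Implicit. Unset Printing Implicit Defensive.
Import Order.TTheory GRing.Theory Num.Theory.
Local Open Scope classical_set_scope.
Local Open Scope ring_scope.

Section MM.
Variable R : realType.

Definition is_metric (T : Type) (d : T -> T -> R) : Prop :=
  (forall x y, 0 <= d x y) /\
  (forall x y, d x y = 0 <-> x = y) /\
  (forall x y, d x y = d y x) /\
  (forall x y z, d x z <= d x y + d y z).

Definition metric_complete (T : Type) (d : T -> T -> R) : Prop :=
  forall u : nat -> T,
    (forall e : R, 0 < e -> exists N : nat, forall m n : nat,
        (N <= m)%N -> (N <= n)%N -> d (u m) (u n) < e) ->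
    exists l : T, forall e : R, 0 < e -> exists N : nat, forall n : nat,
        (N <= n)%N -> d (u n) l < e.

(* existence of a countable dense sequence (the spaces considered carry a
   probability measure, hence are nonempty) *)
Definition metric_separable (T : Type) (d : T -> T -> R) : Prop :=
  exists D : nat -> T, forall (x : T) (e : R), 0 < e -> exists n : nat, d x (D n) < e.

Definition metric_open (T : Type) (d : T -> T -> R) : set (set T) :=
  [set A | forall x, A x -> exists2 e : R, 0 < e & [set y | d x y < e] `<=` A].

Definition is_borel_for d0 (T : measurableType d0) (d : T -> T -> R) : Prop :=
  (@measurable d0 T) = <<s metric_open d >>.

Definition mm_space d0 (T : measurableType d0) (d : T -> T -> R)
    (m : probability T R) : Prop :=
  is_metric d /\ metric_complete d /\ metric_separable d /\ is_borel_for d.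

(* diameter, with the convention diam set0 = 0 *)
Definition diam (T : Type) (d : T -> T -> R) (A : set T) : \bar R :=
  ereal_sup ([set 0%E] `|` [set (d x y)%:E | x in A & y in A]).

Definition PD_R (nu : set R -> \bar R) (alpha : R) : \bar R :=
  ereal_inf [set diam (fun x y : R => `|x - y|) A |
             A in [set A : set R | measurable A /\ (alpha%:E <= nu A)%E]].

Definition lipschitz1 (T : Type) (d : T -> T -> R) (f : T -> R) : Prop :=
  forall x y, `|f x - f y| <= d x y.

Definition OD (T : Type) (d : T -> T -> R) (m : set T -> \bar R) (kappa : R)
  : \bar R :=
  ereal_sup [set PD_R (fun A => m (f @^-1` A)) (1 - kappa) |
             f in [set f : T -> R | lipschitz1 d f]].

Definition Fp (p : \bar R) (s t : R) : R :=
  match p with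
  | EFin r => powR (powR s r + powR t r) r^-1
  | _ => Num.max s t
  end.

Definition dist_p (p : \bar R) (X Y : Type) (dX : X -> X -> R) (dY : Y -> Y -> R)
  (u v : X * Y) : R := Fp p (dX u.1 v.1) (dY u.2 v.2).

End MM.

(* Main.v *)
Require Import Defs.
From HB Require Import structures.
From mathcomp Require Import all_boot all_order all_algebra.
From mathcomp Require Import all_classical all_reals all_analysis.
From mathcomp Require Import ring lra.
Import Order.TTheory GRing.Theory Num.Theory.
Local Open Scope classical_set_scope.
Local Open Scope ring_scope.

Module Aux.
Set Implicit Arguments. Unset Strict Implicit.

Section Helpers.
Context {R : realType}.

Lemma Fp_l (p : \bar R) (s : R) : (1%:E <= p)%E -> 0 <= s -> Fp p s 0 = s.
Proof.
case: p => [r| |] //= hr hs.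
- rewrite lee_fin in hr.
  have r0 : r != 0 by rewrite gt_eqF // (lt_le_trans ltr01 hr).
  by rewrite powR0 // addr0 -powRrM mulfV // powRr1.
- by rewrite max_l.
Qed.

Lemma Fp_r (p : \bar R) (s : R) : (1%:E <= p)%E -> 0 <= s -> Fp p 0 s = s.
Proof.
case: p => [r| |] //= hr hs.
- rewrite lee_fin in hr.
  have r0 : r != 0 by rewrite gt_eqF // (lt_le_trans ltr01 hr).
  by rewrite powR0 // add0r -powRrM mulfV // powRr1.
- by rewrite max_r.
Qed.

Lemma lip_meas d0 (T : measurableType d0) (d : T -> T -> R) (f : T -> R) :
  is_borel_for d -> lipschitz1 d f -> measurable_fun setT f.
Proof.
move=> hb hf; apply: (measurability _ (measurable_realfun.RGenOInfty.measurableE R)).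
move=> _ [_ [x ->] <-]; rewrite setTI /is_borel_for in hb *; rewrite hb.
apply: sub_sigma_algebra => y /=; rewrite in_itv /= andbT => xy.
exists (f y - x); first by rewrite subr_gt0.
move=> z /= dz; rewrite in_itv /= andbT.
have := hf y z; rewrite ler_norml => /andP[_ h].
have : f y - f z < f y - x by apply: le_lt_trans dz.
by rewrite ltrD2l ltrN2.
Qed.

Lemma int_mono d0 (T : measurableType d0) (mu : {measure set T -> \bar R})
  (f g : T -> \bar R) : (forall x, 0 <= f x)%E -> (forall x, f x <= g x)%E ->
  (\int[mu]_x f x <= \int[mu]_x g x)%E.
Proof.
move=> f0 fg; have g0 : forall x, (0 <= g x)%E by move=> x; exact: le_trans (fg x).
rewrite !ge0_integralTE //; apply: le_ereal_sup => _ [h hf <-].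
by exists h => // x; apply: le_trans (fg x).
Qed.

End Helpers.

Section Helpers2.
Context {R : realType}.

Lemma diam_le (T : Type) (d : T -> T -> R) (A : set T) u v :
  A u -> A v -> ((d u v)%:E <= diam d A)%E.
Proof. by move=> Au Av; apply: ereal_sup_ubound; right; exists u => //; exists v. Qed.

Lemma diam_ge0 (T : Type) (d : T -> T -> R) (A : set T) : (0 <= diam d A)%E.
Proof. by apply: ereal_sup_ubound; left. Qed.

Lemma diam_ub (T : Type) (d : T -> T -> R) (A : set T) (M : R) :
  0 <= M -> (forall u v, A u -> A v -> d u v <= M) -> (diam d A <= M%:E)%E.
Proof.
move=> M0 hM; apply: ge_ereal_sup => _ [-> //|[u Au [v Av <-]]].
by rewrite lee_fin; apply: hM.
Qed.

Lemma diam_lt (T : Type) (d : T -> T -> R) (A : set T) (M : R) u v :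
  (diam d A < M%:E)%E -> A u -> A v -> d u v <= M.
Proof.
move=> hd Au Av; rewrite -lee_fin.
exact: (le_trans (diam_le d Au Av) (ltW hd)).
Qed.

Lemma PD_ge0 (nu : set R -> \bar R) al : (0 <= PD_R nu al)%E.
Proof. by apply: le_ereal_inf_tmp => _ [A _ <-]; apply: diam_ge0. Qed.

Lemma OD_ge0 (T : Type) (d : T -> T -> R) (m : set T -> \bar R) k :
  (forall x y, 0 <= d x y) -> (0 <= OD d m k)%E.
Proof.
move=> d0; apply: le_trans (PD_ge0 (fun A => m (cst 0 @^-1` A)) (1 - k)) _.
apply: ereal_sup_ubound; exists (cst 0) => //= x y.
by rewrite subrr normr0.
Qed.

Lemma lip_pre d0 (T : measurableType d0) (d : T -> T -> R) (f : T -> R) B :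
  is_borel_for d -> lipschitz1 d f -> measurable B -> measurable (f @^-1` B).
Proof.
move=> hb hf mB; rewrite -[f @^-1` B]setTI; exact: (lip_meas hb hf measurableT mB).
Qed.

Lemma nonempty_meas d0 (T : measurableType d0) (mu : {measure set T -> \bar R})
  (S : set T) (k : R) : 0 < k -> (k%:E <= mu S)%E -> exists x, S x.
Proof.
move=> k0 hk; case: (pselect (exists x, S x)) => // nex.
have S0 : S = set0 by apply/seteqP; split => x //= Sx; apply: nex; exists x.
by move: hk; rewrite S0 measure0 lee_fin leNgt k0.
Qed.

End Helpers2.

Lemma probE {R : realType} d0 (T : measurableType d0) (P : probability T R) (A : set T) :
  measurable A -> P A = (fine (P A))%:E.
Proof.
move=> mA; rewrite fineK // ge0_fin_numE ?measure_ge0 //.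
exact: le_lt_trans (probability_le1 P mA) (ltry _).
Qed.
End Aux.
Import Aux.

Ltac rlra := repeat match goal with
  | H : context [constructive_ereal.extended _] |- _ => clear H
  | H : context [ereal_display] |- _ => clear H end; lra.

Theorem mainTheorem8 (R : realType) (d1 d2 : measure_display)
  (X : measurableType d1) (Y : measurableType d2)
  (dX : X -> X -> R) (dY : Y -> Y -> R)
  (mX : probability X R) (mY : probability Y R)
  (hX : mm_space dX mX) (hY : mm_space dY mY)
  (p : \bar R) (hp : (1%:E <= p)%E)
  (kappa kappa' : R)
  (hk : 0 < kappa < 1) (hk' : 0 < kappa' < 2^-1) :
  (OD (dist_p p dX dY) (mX \x mY)%E (kappa + kappa')
     <= adde (OD dX mX kappa) (mule 2%:E (OD dY mY kappa')))%E.
Proof.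
move: hX hY => [[dX0 [dXeq [dXsym _]]] [_ [_ bX]]] [[dY0 [dYeq [dYsym _]]] [_ [_ bY]]].
have addeE : forall x y : \bar R, adde x y = (x + y)%E by [].
rewrite addeE.
have a0 := OD_ge0 mX kappa dX0.
have b0 := OD_ge0 mY kappa' dY0.
case Ha: (OD dX mX kappa) a0 => [a'| |] // a0; last first.
  have h2 : (0 <= 2%:E * OD dY mY kappa')%E by apply: mule_ge0.
  rewrite addye ?leey //; apply/negP => /eqP h; by rewrite h in h2.
case Hb: (OD dY mY kappa') b0 => [b'| |] // b0; last first.
  by rewrite muleC gt0_mulye ?lte_fin // addey ?leey.
rewrite -EFinM -EFinD; apply/lee_addgt0Pr => e e0.
rewrite lee_fin in a0; rewrite lee_fin in b0.
move: hk hk' => /andP[k0 k1] /andP[k'0 k'1].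
pose eps := e / 3.
have eps0 : 0 < eps by rewrite /eps divr_gt0.
have e3 : 3 * eps = e by rewrite /eps mulrC divfK // pnatr_eq0.
apply: ge_ereal_sup => _ [f hf <-].
pose g x := fun y => f (x, y).
have gl x : lipschitz1 dY (g x).
  move=> y y'; have := hf (x, y) (x, y').
  by rewrite /dist_p /= (proj2 (dXeq x x) erefl) Fp_r.
have PDY x : (PD_R (fun A => mY (g x @^-1` A)) (1 - kappa') < (b' + eps)%:E)%E.
  apply: (@le_lt_trans _ _ b'%:E); last by rewrite lte_fin ltrDl.
  rewrite -Hb; apply: ereal_sup_ubound; by exists (g x) => //; apply: gl.
have getJ : forall x, exists J, measurable J /\ ((1 - kappa')%:E <= mY (g x @^-1` J))%E
    /\ forall u v, J u -> J v -> `|u - v| <= b' + eps.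
  move=> x.
  have [_ [J [mJ hJ] <-] hlt] := ereal_inf_lt (PDY x).
  by exists J; split => //; split => // u v Ju Jv; exact: (diam_lt hlt Ju Jv).
pose T x := [set t : R | ((2^-1)%:E <= mY [set y | (t <= g x y)%R])%E].
pose m x := sup (T x).
have measge x t : measurable [set y | t <= g x y].
  have -> : [set y | t <= g x y] = g x @^-1` `[t, +oo[.
    by apply/seteqP; split => y /=; rewrite in_itv /= andbT.
  exact: lip_pre bY (gl x) (measurable_itv _).
have key x (J : set R) (D : R) (y : Y) : measurable J -> ((1 - kappa')%:E <= mY (g x @^-1` J))%E ->
    (forall u v, J u -> J v -> `|u - v| <= D) -> J (g x y) ->
    has_sup (T x) /\ `|g x y - m x| <= D.
  move=> mJ hJ hD Jz.
  have mgJ : measurable (g x @^-1` J) := lip_pre bY (gl x) mJ.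
  have ub : ubound (T x) (g x y + D).
    move=> t Tt; rewrite leNgt; apply/negP => lt.
    have sub : [set y' | t <= g x y'] `<=` ~` (g x @^-1` J).
      move=> y' /= ht hJ'; have := hD _ _ hJ' Jz; rewrite ler_norml => /andP[_ h].
      rlra.
    have := le_measure mY _ _ sub; rewrite !inE => /(_ (measge x t) (measurableC mgJ)).
    move=> h0; have h1 : (mY [set y' | (t <= g x y')%R] <= 1 - mY (g x @^-1` J))%E.
      by rewrite -(probability_setC _ mgJ).
    rewrite (probE _ mgJ) in h1.
    move: Tt; rewrite /T /= => Tt.
    have := le_trans Tt h1; rewrite (probE _ mgJ) in hJ; move: hJ.
    by rewrite -EFinB !lee_fin; rlra.
  have lb : T x (g x y - D).
    rewrite /T /=; apply: (@le_trans _ _ (1 - kappa')%:E); first by rewrite lee_fin; rlra.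
    apply: le_trans hJ _; apply: le_measure; rewrite ?inE //.
    move=> y' /= Jy'; have := hD _ _ Jy' Jz; rewrite ler_norml => /andP[h _]; rlra.
  have hs : has_sup (T x) by split; [exists (g x y - D) | exists (g x y + D)].
  split => //; rewrite ler_norml; apply/andP; split.
  - have : m x <= g x y + D by apply: ge_sup => //; exists (g x y - D).
    rlra.
  - have : g x y - D <= m x by apply: ub_le_sup => //; case: hs.
    rlra.
have hsup x : has_sup (T x).
  have [J [mJ [hJ hD]]] := getJ x.
  have [y Jy] := nonempty_meas (k := 1 - kappa') ltac:(lra) hJ.
  exact: (key x J _ y mJ hJ hD Jy).1.
have mlip : lipschitz1 dX m.
  have half : forall x x', m x <= m x' + dX x x'.
    move=> x x'; have sub : forall t, T x t -> T x' (t - dX x x').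
      move=> t Tt; rewrite /T /=; apply: le_trans Tt _; apply: le_measure; rewrite ?inE //.
      move=> y /= ht; have := hf (x, y) (x', y).
      rewrite /dist_p /= (proj2 (dYeq y y) erefl) Fp_l // ler_norml => /andP[h1 h2].
      rewrite /g /=; rewrite /g /= in ht; rlra.
    apply: ge_sup; first by case: (hsup x).
    move=> t Tt; have : t - dX x x' <= m x'.
      by apply: ub_le_sup; [case: (hsup x')|exact: sub].
    rlra.
  move=> x x'; rewrite ler_norml; have := half x x'; have := half x' x.
  rewrite dXsym => h1 h2; apply/andP; split; rlra.
have PDX : (PD_R (fun A => mX (m @^-1` A)) (1 - kappa) < (a' + eps)%:E)%E.
  apply: (@le_lt_trans _ _ a'%:E); last by rewrite lte_fin ltrDl.
  rewrite -Ha; apply: ereal_sup_ubound; by exists m => //; apply: mlip.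
have [_ [A [mA hA] <-] hAlt] := ereal_inf_lt PDX.
have hAw u v : A u -> A v -> `|u - v| <= a' + eps.
  by move=> Au Av; exact: (diam_lt hAlt Au Av).
have [x0 Ax0] := nonempty_meas (k := 1 - kappa) ltac:(lra) hA.
rewrite /= in Ax0.
have Aub : has_ubound A.
  exists (m x0 + (a' + eps)) => u Au; have := hAw u (m x0) Au Ax0.
  rewrite ler_norml => /andP[_ h]; rlra.
have Alb : has_lbound A.
  exists (m x0 - (a' + eps)) => u Au; have := hAw u (m x0) Au Ax0.
  rewrite ler_norml => /andP[h _]; rlra.
pose lo := inf A; pose hi := sup A.
have hlo u : A u -> lo <= u by move=> Au; exact: ge_inf.
have hhi u : A u -> u <= hi by move=> Au; exact: ub_le_sup.
have hw : hi - lo <= a' + eps.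
  have : hi - (a' + eps) <= lo.
    apply: lb_le_inf; first by exists (m x0).
    move=> v Av; rewrite lerBlDr; apply: ge_sup; first by exists (m x0).
    move=> u Au; have := hAw u v Au Av; rewrite ler_norml => /andP[_ h]; rlra.
  rlra.
pose c := b' + eps.
pose B := `[lo - c, hi + c]%classic.
have mB : measurable B by exact: measurable_itv.
have hlo0 := hlo _ Ax0. have hhi0 := hhi _ Ax0.
apply: (@le_trans _ _ (diam (fun u v => `|u - v|) B)).
  apply: ereal_inf_lbound; exists B => //; split => //.
  rewrite /product_measure1 /=.
  pose E := m @^-1` A.
  have mE : measurable E := lip_pre bX mlip mA.
  apply: (@le_trans _ _ (\int[mX]_x ((1 - kappa') * \1_E x)%:E)%E).
    rewrite (integralZl_indic measurableT (fun=> E)) //=; last first.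
      by move=> h; exfalso; rlra.
    rewrite integral_indic // setIT.
    apply: (@le_trans _ _ ((1 - kappa') * (1 - kappa))%:E).
      by rewrite lee_fin; nra.
    rewrite EFinM; apply: lee_wpmul2l => //; rewrite lee_fin; rlra.
  apply: int_mono => x.
    by rewrite lee_fin mulr_ge0 // ?indicE ?ler0n //; rlra.
  rewrite indicE; case: (boolP (x \in E)) => xE; last by rewrite mulr0 measure_ge0.
  rewrite mulr1 /=.
  have AE : A (m x) by move: xE; rewrite inE.
  have [J [mJ [hJ hD]]] := getJ x.
  have -> : xsection (f @^-1` B) x = g x @^-1` B.
    by apply/seteqP; split => y; rewrite /xsection /= inE.
  have hJc := hJ; apply: le_trans hJ _; apply: le_measure; rewrite ?inE.
  - exact: lip_pre bY (gl x) mJ.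
  - exact: lip_pre bY (gl x) mB.
  move=> y /= Jy; have [_ h] := key x J c y mJ hJc hD Jy.
  have h3 := hlo _ AE; have h4 := hhi _ AE; move: h.
  rewrite /B /= in_itv /= ler_norml => /andP[h1 h2]; apply/andP; split; rlra.
apply: le_trans (diam_ub (M := hi + c - (lo - c)) _ _) _.
- rewrite /c; rlra.
- move=> u v; rewrite /B /= !in_itv /= => /andP[? ?] /andP[? ?].
  rewrite ler_norml; apply/andP; split; rlra.
- rewrite -EFinD lee_fin /c; rlra.
Qed.
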